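(* Let $\Bbbk$ be a field of characteristic zero, $\lambda\in\Bbbk^*$, and $s_\lambda=t+\lambda t^{-1}$. Then $$\mathcal O(\lambda)=L(s_\lambda)=\Bbbk[t+\lambda t^{-1}](t^2-\lambda)\partial=\Bbbk[s_\lambda](s_\lambda^2-4\lambda)\partial_{s_\lambda}\cong(t^2-4\lambda)\Bbbk[t]\partial,$$ where the isomorphism is induced by the change of variables $s_\lambda\mapsto t$. Consequently $\mathcal O(\lambda)$ has a basis $\{u^{(\lambda)}_n\mid n\ge1\}$, where $u^{(\lambda)}_n=-s_\lambda^{n-1}(s_\lambda^2-4\lambda)\partial_{s_\lambda}=-(t+\lambda t^{-1})^{n-1}(t^2-\lambda)\partial$, and $[u^{(\lambda)}_n,u^{(\lambda)}_m]=(n-m)(u^{(\lambda)}_{n+m}-4\lambda u^{(\lambda)}_{n+m-2})$ for all $n,m\ge1$.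
   Context: $\mathcal W=\Bbbk[t,t^{-1}]\partial$ with $\partial=d/dt$ is the Witt algebra, $L_n=-t^{n+1}\partial$, $[f\partial,g\partial]=(fg'-f'g)\partial$. For $\lambda\in\Bbbk^*$, $\mathcal O^{(\lambda)}_n=L_n-\lambda^nL_{-n}$ and $\mathcal O(\lambda)=\mathrm{span}\{\mathcal O^{(\lambda)}_n\mid n\ge1\}\subseteq\mathcal W$. For $s\in\Bbbk[t,t^{-1}]$ nonconstant, $\partial_s=\frac{1}{s'}\partial\in\mathrm{Der}(\Bbbk(t))$ (so $\partial_s(s)=1$), $\mathrm{Der}(\Bbbk[s])=\Bbbk[s]\partial_s$, and $L(s)=\mathcal W\cap\mathrm{Der}(\Bbbk[s])$, the intersection taken in $\mathrm{Der}(\Bbbk(t))$. $\Bbbk[t]\partial$ is the one-sided Witt algebra $\mathrm{Der}(\Bbbk[t])$. *)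

(* Defs.v *)
From HB Require Import structures.
From mathcomp Require Import all_boot all_order all_algebra.
Set Implicit Arguments. Unset Strict Implicit. Unset Printing Implicit Defensive.
Import Order.TTheory GRing.Theory Num.Theory.
Local Open Scope ring_scope.

(* A derivation of k(t) is  f * d/dt  with f in k(t); we identify
   the vector field f d/dt with its coefficient f in the rational function
   field  RF K := {fraction {poly K}}  (so W, Der(k[s]) etc. are subsets of RF K). *)

Notation RF K := {fraction {poly K}}.

Section Defs.
Variable K : fieldType.

Definition kc (c : K) : RF K := tofrac (c%:P).
Definition tt : RF K := tofrac 'X.

Definition Dt (f : RF K) : RF K :=
  let r := repr f in
  tofrac ((\n_r)^`() * \d_r - \n_r * (\d_r)^`()) / tofrac (\d_r ^+ 2).

(* Lie bracket of vector fields: [f d, g d] = (f g' - f' g) d *)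
Definition wbr (f g : RF K) : RF K := f * Dt g - Dt f * g.

Definition in_W (f : RF K) : Prop :=
  exists (p : {poly K}) (n : nat), f = tofrac p / tt ^+ n.

Definition peval (g : {poly K}) (s : RF K) : RF K := (map_poly kc g).[s].

(* f d/dt lies in Der(k[s]) = k[s] d_s, where d_s = (1/s') d/dt *)
Definition in_Der_poly (s f : RF K) : Prop :=
  exists g : {poly K}, f = peval g s / Dt s.

Definition in_Ls (s f : RF K) : Prop := in_W f /\ in_Der_poly s f.

Definition Lw (n : int) : RF K := - tt ^ (n + 1).

Definition Ow (lam : K) (n : nat) : RF K := Lw n - kc (lam ^+ n) * Lw (- n%:Z).

Definition in_O (lam : K) (f : RF K) : Prop :=
  exists (N : nat) (c : nat -> K), f = \sum_(1 <= n < N) kc (c n) * Ow lam n.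

Definition slam (lam : K) : RF K := tt + kc lam / tt.

Definition uw (lam : K) (n : nat) : RF K :=
  - (slam lam ^ (n%:Z - 1)) * (tt ^+ 2 - kc lam).

Definition cov (lam : K) (g : {poly K}) : RF K := peval g (slam lam) / Dt (slam lam).

End Defs.

(* Main.v *)
Require Import Defs.
From HB Require Import structures.
From mathcomp Require Import all_boot all_order all_algebra.
Import Order.TTheory GRing.Theory Num.Theory.
Local Open Scope ring_scope.
From mathcomp Require Import ring.
Set Implicit Arguments. Unset Strict Implicit. Unset Printing Implicit Defensive.
Local Open Scope quotient_scope.

Section S.
Variable K : fieldType.
Lemma reprE (f : RF K) : f = tofrac (\n_(repr f)) / tofrac (\d_(repr f)).
Proof.
have hd := denom_ratioP (repr f).
apply: (canRL (mulfK _)); first by rewrite tofrac_eq0.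
rewrite -{1}[f]reprK.
rewrite /tofrac -!lock.
rewrite [LHS](_ : _ = \pi_(RF K) (FracField.mulf (repr f) (Ratio \d_(repr f) 1))); last by rewrite FracField.pi_mul.
apply/eqmodP => /=.
rewrite FracField.equivfE /FracField.mulf !numden_Ratio ?oner_neq0 ?mulf_neq0 ?oner_neq0 //.
by rewrite !mulr1 mulrC.
Qed.

Lemma poly_id_aux (n d p q n' d' p' q' : {poly K}) :
  n * q = p * d -> n' * q + n * q' = p' * d + p * d' ->
  (n' * d - n * d') * q ^+ 2 = (p' * q - p * q') * d ^+ 2.
Proof.
move=> e1 e2; apply/eqP; rewrite -subr_eq0.
rewrite (_ : _ - _ = d * q * ((n' * q + n * q') - (p' * d + p * d')) - (d' * q + q' * d) * (n * q - p * d)); last by ring.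
by rewrite e1 e2; apply/eqP; ring.
Qed.

Lemma DtE (p q : {poly K}) : q != 0 ->
  Dt (tofrac p / tofrac q) = tofrac (p^`() * q - p * q^`()) / tofrac (q ^+ 2).
Proof.
move=> q0; rewrite /Dt.
set f := tofrac p / tofrac q.
have E := reprE f.
have hd := denom_ratioP (repr f).
move: E hd; set n := \n_(repr f); set d := \d_(repr f) => E hd.
have e1 : n * q = p * d.
  apply/eqP; rewrite -tofrac_eq !tofracM; apply/eqP.
  have := E; rewrite {1}/f => /eqP; rewrite eqr_div; last 2 first.
  - by rewrite tofrac_eq0.
  - by rewrite tofrac_eq0.
  by move=> /eqP ->; rewrite mulrC.
have e2 : n^`() * q + n * q^`() = p^`() * d + p * d^`().
  by rewrite -!derivM e1.
apply/eqP; rewrite eqr_div; last 2 first.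
- by rewrite tofrac_eq0 expf_neq0 // denom_ratioP.
- by rewrite tofrac_eq0 expf_neq0.
by rewrite -!tofracM (poly_id_aux e1 e2).
Qed.

Lemma fracP (f : RF K) : exists p q : {poly K}, q != 0 /\ f = tofrac p / tofrac q.
Proof. by exists (\n_(repr f)), (\d_(repr f)); split; [exact: denom_ratioP | exact: reprE]. Qed.

Lemma tofrac_neq0 (q : {poly K}) : q != 0 -> tofrac q != 0.
Proof. by rewrite tofrac_eq0. Qed.

Lemma tofracX2 (q : {poly K}) : tofrac (q ^+ 2) = tofrac q ^+ 2.
Proof. by rewrite tofracM. Qed.

Ltac tfE := rewrite ?tofracX2 ?(tofracD, tofracB, tofracM, rmorphXn, tofracN, tofrac1, tofrac0).

Lemma gen_add (F : fieldType) (A A' B B' C C' D D' X X' Y Y' : F) :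
  B != 0 -> D != 0 -> X = A*D + C*B -> Y = B*D ->
  X' = A'*D + A*D' + (C'*B + C*B') -> Y' = B'*D + B*D' ->
  (X'*Y - X*Y')/(Y^+2) = (A'*B - A*B')/B^+2 + (C'*D - C*D')/D^+2.
Proof. by move=> hb hd -> -> -> ->; field; rewrite hb hd. Qed.

Lemma gen_add0 (F : fieldType) (A B C D : F) :
  B != 0 -> D != 0 -> A / B + C / D = (A*D + C*B)/(B*D).
Proof. by move=> hb hd; field; rewrite hb hd. Qed.

Lemma gen_mul (F : fieldType) (A A' B B' C C' D D' X X' Y Y' : F) :
  B != 0 -> D != 0 -> X = A*C -> Y = B*D ->
  X' = A'*C + A*C' -> Y' = B'*D + B*D' ->
  (X'*Y - X*Y')/(Y^+2) = (A'*B - A*B')/B^+2 * (C / D) + (A / B) * ((C'*D - C*D')/D^+2).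
Proof. by move=> hb hd -> -> -> ->; field; rewrite hb hd. Qed.

Lemma gen_mul0 (F : fieldType) (A B C D : F) :
  B != 0 -> D != 0 -> A / B * (C / D) = (A*C)/(B*D).
Proof. by move=> hb hd; field; rewrite hb hd. Qed.

Lemma gen_inv (F : fieldType) (A A' B B' : F) :
  A != 0 -> B != 0 ->
  (B'*A - B*A')/(A^+2) = - ((A'*B - A*B')/B^+2) / (A / B)^+2.
Proof. by move=> ha hb; field; rewrite ha hb. Qed.

Lemma Dt_tofrac (p : {poly K}) : Dt (tofrac p) = tofrac p^`().
Proof.
have := @DtE p 1 (oner_neq0 _).
by rewrite tofrac1 !divr1 derivC mulr0 mulr1 subr0 expr1n tofrac1 divr1.
Qed.

Lemma Dt_add (f g : RF K) : Dt (f + g) = Dt f + Dt g.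
Proof.
have [a [b [b0 ->]]] := fracP f; have [c [d [d0 ->]]] := fracP g.
have bd0 : b * d != 0 by rewrite mulf_neq0.
rewrite gen_add0 ?tofrac_neq0 // -!tofracM -tofracD !DtE //.
rewrite !tofracX2 !tofracB !tofracM.
by apply: gen_add; rewrite ?tofrac_neq0 // ?derivD ?derivM; tfE.
Qed.

Lemma Dt_mul (f g : RF K) : Dt (f * g) = Dt f * g + f * Dt g.
Proof.
have [a [b [b0 ->]]] := fracP f; have [c [d [d0 ->]]] := fracP g.
have bd0 : b * d != 0 by rewrite mulf_neq0.
rewrite gen_mul0 ?tofrac_neq0 // -!tofracM !DtE //.
rewrite !tofracX2 !tofracB !tofracM.
by apply: gen_mul; rewrite ?tofrac_neq0 // ?derivD ?derivM; tfE.
Qed.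

Lemma Dt_inv (f : RF K) : f != 0 -> Dt (f^-1) = - Dt f / f ^+ 2.
Proof.
have [a [b [b0 ->]]] := fracP f => f0.
have a0 : a != 0.
  by apply: contraNneq f0 => ->; rewrite tofrac0 mul0r.
rewrite invf_div !DtE // !tofracX2. tfE.
by apply: gen_inv; rewrite ?tofrac_neq0.
Qed.

Lemma Dt0 : Dt (0 : RF K) = 0.
Proof. by rewrite -tofrac0 Dt_tofrac deriv0 tofrac0. Qed.

Lemma Dt_opp (f : RF K) : Dt (- f) = - Dt f.
Proof. by apply/eqP; rewrite -subr_eq0 opprK -Dt_add addNr Dt0. Qed.

Lemma Dt_sub (f g : RF K) : Dt (f - g) = Dt f - Dt g.
Proof. by rewrite Dt_add Dt_opp. Qed.

Lemma Dt_kc (c : K) : Dt (kc c) = 0.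
Proof. by rewrite /kc Dt_tofrac derivC tofrac0. Qed.

Lemma Dt_tt : Dt (tt K) = 1.
Proof. by rewrite /tt Dt_tofrac derivX tofrac1. Qed.

Lemma Dt_exp (f : RF K) k : Dt (f ^+ k) = k%:R * f ^+ k.-1 * Dt f.
Proof.
elim: k => [|k IH]; first by rewrite expr0 !mul0r -tofrac1 Dt_tofrac derivC tofrac0.
rewrite exprS Dt_mul IH /=.
case: k IH => [|k] IH; first by rewrite /= expr0; ring.
by rewrite /= exprS; ring.
Qed.
End S.

Section T.
Variable K : fieldType.
HB.instance Definition _ := GRing.RMorphism.copy (@kc K) (@tofrac {poly K} \o (@polyC K)).

Lemma pevalD (g h : {poly K}) (s : RF K) : peval (g + h) s = peval g s + peval h s.
Proof. by rewrite /peval rmorphD hornerD. Qed.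
Lemma pevalB (g h : {poly K}) (s : RF K) : peval (g - h) s = peval g s - peval h s.
Proof. by rewrite /peval rmorphB hornerD hornerN. Qed.
Lemma pevalN (g : {poly K}) (s : RF K) : peval (- g) s = - peval g s.
Proof. by rewrite /peval rmorphN hornerN. Qed.
Lemma pevalM (g h : {poly K}) (s : RF K) : peval (g * h) s = peval g s * peval h s.
Proof. by rewrite /peval rmorphM hornerM. Qed.
Lemma pevalC (c : K) (s : RF K) : peval c%:P s = kc c.
Proof. by rewrite /peval map_polyC hornerC. Qed.
Lemma pevalX (s : RF K) : peval 'X s = s.
Proof. by rewrite /peval map_polyX hornerX. Qed.
Lemma pevalXn (s : RF K) n : peval 'X^n s = s ^+ n.
Proof. by rewrite /peval map_polyXn hornerXn. Qed.
Lemma pevalZ (c : K) (g : {poly K}) (s : RF K) : peval (c *: g) s = kc c * peval g s.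
Proof. by rewrite -mul_polyC pevalM pevalC. Qed.
Lemma peval0 (s : RF K) : peval 0 s = 0.
Proof. by rewrite /peval rmorph0 horner0. Qed.
Lemma peval_sum (s : RF K) (I : Type) (r : seq I) (P : pred I) (F : I -> {poly K}) :
  peval (\sum_(i <- r | P i) F i) s = \sum_(i <- r | P i) peval (F i) s.
Proof. by rewrite /peval rmorph_sum horner_sum. Qed.
Lemma kcM (a b : K) : kc (a * b) = kc a * kc b.
Proof. by rewrite rmorphM. Qed.
Lemma kc_nat n : kc (n%:R : K) = n%:R.
Proof. by rewrite rmorph_nat. Qed.
Lemma kc_exp (a : K) n : kc (a ^+ n) = kc a ^+ n.
Proof. by rewrite rmorphXn. Qed.
Lemma kc_inj (a b : K) : kc a = kc b -> a = b.
Proof. by move=> /eqP; rewrite /kc tofrac_eq => /eqP; apply: polyC_inj. Qed.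

Lemma Dt_peval (g : {poly K}) (s : RF K) : Dt (peval g s) = peval g^`() s * Dt s.
Proof.
elim/poly_ind: g => [|g c IH]; first by rewrite deriv0 peval0 Dt0 mul0r.
rewrite derivMXaddC !pevalD !pevalM !pevalX !pevalC Dt_add Dt_kc addr0 Dt_mul IH.
ring.
Qed.

Lemma tt_neq0 : tt K != 0.
Proof. by rewrite /tt tofrac_eq0 polyX_eq0. Qed.

Lemma ttXn n : tt K ^+ n = tofrac 'X^n.
Proof. by rewrite /tt rmorphXn. Qed.

End T.


Lemma g_ss (F : fieldType) (T L : F) : T != 0 ->
  (T + L / T) ^+ 2 - 4%:R * L = (T ^+ 2 - L) ^+ 2 / T ^+ 2.
Proof. by move=> h; field; rewrite h. Qed.

Lemma g_Ds (F : fieldType) (T L : F) : T != 0 ->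
  1 + (0 * T^-1 + L * (- 1 / T ^+ 2)) = (T ^+ 2 - L) / T ^+ 2.
Proof. by move=> h; field; rewrite h. Qed.

Lemma g_key (F : fieldType) (T L : F) : T != 0 -> T ^+ 2 - L != 0 ->
  ((T ^+ 2 - L) ^+ 2 / T ^+ 2) / ((T ^+ 2 - L) / T ^+ 2) = T ^+ 2 - L.
Proof. by move=> h h2; field; rewrite h h2. Qed.

Lemma g_step (F : fieldType) (T L A P C : F) : T != 0 ->
  A * P * (T * T ^+ 1 + L) + C * (T * A) = T * A * (P * (T + L / T) + C).
Proof. by move=> h; field; rewrite h. Qed.

Lemma sum_ext (V : zmodType) (F : nat -> V) N M : (N <= M)%N ->
  \sum_(1 <= n < M) (if (n < N)%N then F n else 0) = \sum_(1 <= n < N) F n.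
Proof.
elim: M => [|M IH] hNM.
  by move: hNM; rewrite leqn0 => /eqP ->; rewrite !big_geq.
have [->|hN] := eqVneq N M.+1.
  by apply: eq_big_nat => n /andP [_ ->].
have hNM' : (N <= M)%N by rewrite -ltnS ltn_neqAle hN hNM.
case: M IH hNM hNM' {hN} => [|M] IH hNM hNM'.
  by rewrite !big_geq //; move: hNM'; rewrite leqn0 => /eqP ->.
by rewrite big_nat_recr //= IH // ltnNge hNM' /= addr0.
Qed.

Lemma sum_single (V : zmodType) (F : nat -> V) d M : (1 <= d < M)%N ->
  \sum_(1 <= n < M) (if n == d then F n else 0) = F d.
Proof.
move=> hd.
rewrite (bigD1_seq d) ?mem_index_iota ?iota_uniq //= eqxx big1_seq ?addr0 //.
by move=> n /andP [/negPf -> _].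
Qed.

Lemma span_monic (K : fieldType) (P : nat -> {poly K}) :
  (forall n, (1 <= n)%N -> P n \is monic /\ size (P n) = n) ->
  forall q : {poly K}, exists N (c : nat -> K), q = \sum_(1 <= n < N) c n *: P n.
Proof.
move=> hP q; have [m] := ubnP (size q); elim: m q => // m IH q hq.
have [->|q0] := eqVneq q 0.
  by exists 0%N, (fun _ => 0); rewrite big_geq.
set d := size q.
have d1 : (1 <= d)%N by rewrite size_poly_gt0.
have [mon sz] := hP d d1.
set q' := q - lead_coef q *: P d.
have hq' : (size q' < d)%N.
  rewrite -[d](prednK d1) ltnS; apply/leq_sizeP => j hj.
  rewrite /q' coefB coefZ.
  move: hj; rewrite leq_eqVlt => /orP [/eqP <-|hj].
    have -> : (P d)`_d.-1 = 1 by move: mon; rewrite monicE /lead_coef sz => /eqP.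
    by rewrite mulr1 /lead_coef subrr.
  move: hj; rewrite (prednK d1) => hj.
  by rewrite !nth_default ?mulr0 ?subrr ?sz.
have [N [c E]] := IH q' (leq_trans hq' hq).
set lc := lead_coef q in q' hq' E *.
exists (maxn N d.+1), (fun n => (if (n < N)%N then c n else 0) + (if n == d then lc else 0)).
have -> : q = q' + lc *: P d by rewrite /q' subrK.
rewrite E.
rewrite [RHS](eq_bigr (fun n => (if (n < N)%N then c n else 0) *: P n + (if n == d then lc else 0) *: P n)); last by move=> n _; rewrite scalerDl.
rewrite big_split /=.
congr (_ + _).
  rewrite -(@sum_ext _ (fun n => c n *: P n) N (maxn N d.+1)) ?leq_maxl //.
  by apply: eq_bigr => n _; case: ifP; rewrite ?scale0r.
rewrite -(@sum_single _ (fun n => lc *: P n) d (maxn N d.+1)); last first.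
  by rewrite d1 /= leq_max ltnSn orbT.
by apply: eq_bigr => n _; case: eqP => [->|]; rewrite ?scale0r.
Qed.

Lemma g_pow (F : fieldType) (x y p0 p1 L : F) n : x * y = L ->
  x ^+ n.+1 - y ^+ n.+1 = (x - y) * p1 -> x ^+ n - y ^+ n = (x - y) * p0 ->
  x ^+ n.+2 - y ^+ n.+2 = (x - y) * ((x + y) * p1 - L * p0).
Proof.
move=> hL h1 h0.
have -> : (x - y) * ((x + y) * p1 - L * p0) = (x + y) * ((x - y) * p1) - L * ((x - y) * p0) by ring.
by rewrite -h1 -h0 -hL !exprS; ring.
Qed.

Lemma g_Ow (F : fieldType) (T L p : F) k : T != 0 ->
  T ^+ k.+1 - (L / T) ^+ k.+1 = (T - L / T) * p ->
  - T ^+ k.+2 - L ^+ k.+1 * - (T ^+ k)^-1 = - p * (T ^+ 2 - L).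
Proof.
move=> hT h.
have -> : - T ^+ k.+2 - L ^+ k.+1 * - (T ^+ k)^-1 = - T * (T ^+ k.+1 - (L / T) ^+ k.+1).
  have hk : T ^+ k != 0 by rewrite expf_neq0.
  rewrite exprMn exprVn !exprS; move: (T ^+ k) hk => U hU.
  by field; apply/andP; split.
by rewrite h; field.
Qed.

Lemma g_main (F : fieldType) (T L A B ph Hh p f : F) n k :
  T != 0 -> T ^+ 2 - L != 0 -> f = p / T ^+ n ->
  f = ph * (T ^+ 2 - L) + (A * (T + L / T) + B) / ((T ^+ 2 - L) / T ^+ 2) ->
  Hh = T ^+ k * ph ->
  (A * (T * T) + B * T + A * L) * T ^+ (n + k + 1) =
  (p * T ^+ k - Hh * (T ^+ 2 - L) * T ^+ n) * (T ^+ 2 - L).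
Proof.
move=> hT hQ E1 E2 E3.
have hn : T ^+ n != 0 by rewrite expf_neq0.
have Ep : p = T ^+ n * f by rewrite E1 mulrC divfK.
rewrite E3 Ep E2 !exprD expr1.
move: (T ^+ n) (T ^+ k) hn => U V hU.
by field; apply/andP; split.
Qed.

Lemma g_cancel (F : fieldType) (A B C : F) : A != 0 -> A * B * C / A = B * C.
Proof. by move=> h; field. Qed.

Lemma poly_le2 (K : fieldType) (r : {poly K}) : (size r <= 2)%N -> r = r`_1 *: 'X + (r`_0)%:P.
Proof.
move=> hr; apply/polyP => i.
rewrite coefD coefZ coefX coefC.
case: i => [|[|i]] /=; rewrite ?mulr0 ?mulr1 ?add0r ?addr0 //.
by rewrite nth_default // (leq_trans hr).
Qed.

Lemma g_br (F : fieldType) (p1 p1' p2 p2' D X : F) : D != 0 ->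
  (p1 * p2' - p1' * p2) / D = p1 / D * (p2' * D * D^-1 + p2 * X) - (p1' * D * D^-1 + p1 * X) * (p2 / D).
Proof. by move=> h; field. Qed.

Section L.
Variable K : fieldType.
Variable lam : K.
Hypothesis lam0 : lam != 0.
Local Notation s := (slam lam).
Local Notation T := (tt K).
Local Notation Q := (tt K ^+ 2 - kc lam).

Lemma QE : Q = tofrac ('X^2 - lam%:P).
Proof. by rewrite tofracB -ttXn. Qed.

Lemma Q_neq0 : Q != 0.
Proof.
rewrite QE tofrac_eq0 -size_poly_eq0 size_XnsubC //.
Qed.

Lemma ssE : s ^+ 2 - kc (4%:R * lam) = Q ^+ 2 / T ^+ 2.
Proof. by rewrite kcM kc_nat g_ss // tt_neq0. Qed.

Lemma DsE : Dt s = Q / T ^+ 2.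
Proof.
rewrite /slam Dt_add Dt_tt Dt_mul Dt_kc Dt_inv ?tt_neq0 // Dt_tt.
by rewrite g_Ds // tt_neq0.
Qed.

Lemma Ds_neq0 : Dt s != 0.
Proof. rewrite DsE; exact: (mulf_neq0 Q_neq0 (invr_neq0 (expf_neq0 2 (@tt_neq0 K)))). Qed.

Lemma keyQ : (s ^+ 2 - kc (4%:R * lam)) / Dt s = Q.
Proof. by rewrite ssE DsE g_key ?tt_neq0 ?Q_neq0. Qed.

Lemma laurent (g : {poly K}) : exists H : {poly K},
  tofrac H = T ^+ (size g).-1 * peval g s /\ H.[0] = lead_coef g * lam ^+ (size g).-1.
Proof.
elim/poly_ind: g => [|g c [H' [E1 E2]]].
  by exists 0; rewrite peval0 mulr0 tofrac0 horner0 lead_coef0 mul0r.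
have [->|g0] := eqVneq g 0.
  rewrite mul0r add0r; exists c%:P; split.
    by rewrite pevalC size_polyC; case: (c != 0); rewrite /= expr0 mul1r.
  by rewrite hornerC lead_coefC size_polyC; case: (c != 0); rewrite /= expr0 mulr1.
have kpos : (0 < size g)%N by rewrite size_poly_gt0.
rewrite size_MXaddC (negPf g0) /=.
move: kpos E1 E2; case E: (size g) => [//|k] _ E1 E2 /=.
exists (H' * ('X^2 + lam%:P) + c *: 'X^(k.+1)); split.
  rewrite tofracD tofracM tofracD -(ttXn _ 2) E1 /= -mul_polyC tofracM -(ttXn _ k.+1).
  rewrite pevalD pevalM pevalX pevalC exprS.
  by rewrite -[tofrac c%:P]/(kc c) (exprS T k) /slam g_step // tt_neq0.
rewrite hornerD hornerM E2 hornerZ hornerXn expr0n /= mulr0 addr0.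
rewrite hornerD hornerXn hornerC expr0n /= add0r.
rewrite lead_coefDl ?lead_coefMX ?exprSr ?mulrA //.
by rewrite size_mulX // E (leq_ltn_trans (size_polyC_leq1 c)).
Qed.

Lemma transc (g : {poly K}) : peval g s = 0 -> g = 0.
Proof.
move=> e; apply/eqP; apply: contraT => g0.
have [H [E1 E2]] := laurent g.
have H0 : H = 0 by apply/eqP; rewrite -tofrac_eq0 E1 e mulr0 eqxx.
have : H.[0] != 0 by rewrite E2 mulf_neq0 ?lead_coef_eq0 // expf_neq0.
by rewrite H0 horner0 eqxx.
Qed.


Fixpoint Pp (n : nat) : {poly K} * {poly K} :=
  if n is n'.+1 then let pr := Pp n' in (pr.2, 'X * pr.2 - lam%:P * pr.1) else (0, 1).
Definition Pn n := (Pp n).1.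

Lemma Pn_rec n : Pn n.+2 = 'X * Pn n.+1 - lam%:P * Pn n.
Proof. by []. Qed.

Lemma pow_id n : T ^+ n - (kc lam / T) ^+ n = (T - kc lam / T) * peval (Pn n) s.
Proof.
have hL : T * (kc lam / T) = kc lam by rewrite mulrC divfK // tt_neq0.
suff : (T ^+ n - (kc lam / T) ^+ n = (T - kc lam / T) * peval (Pn n) s) /\
       (T ^+ n.+1 - (kc lam / T) ^+ n.+1 = (T - kc lam / T) * peval (Pn n.+1) s) by case.
elim: n => [|n [IH0 IH1]].
  by rewrite /Pn /= peval0 pevalC !expr0 !expr1 subrr mulr0 -[kc 1]/(tofrac 1) tofrac1 mulr1.
split=> //.
rewrite Pn_rec pevalB !pevalM pevalX pevalC.
by rewrite (g_pow hL IH1 IH0).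
Qed.

Lemma OwE n : (1 <= n)%N -> Ow lam n = - peval (Pn n) s * Q.
Proof.
case: n => [//|k] _.
rewrite /Ow /Lw.
have -> : (k.+1%:Z + 1 = (k.+2)%:Z)%R by rewrite -PoszD addn1.
have -> : (- (k.+1)%:Z + 1 = - (k%:Z))%R.
  by rewrite -addn1 PoszD opprD subrK.
rewrite -exprnP -exprnN kc_exp.
apply: g_Ow; first exact: tt_neq0.
exact: pow_id.
Qed.

Lemma Pn_prop n : (size (Pn n) <= n)%N /\ ((1 <= n)%N -> Pn n \is monic /\ size (Pn n) = n).
Proof.
suff : ((size (Pn n) <= n)%N /\ ((1 <= n)%N -> Pn n \is monic /\ size (Pn n) = n)) /\
       ((size (Pn n.+1) <= n.+1)%N /\ (Pn n.+1 \is monic /\ size (Pn n.+1) = n.+1)).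
  by case.
elim: n => [|n [[IH0a IH0b] [IH1a [IH1m IH1s]]]].
  by rewrite /Pn /= size_poly0 size_poly1 monic1.
split; first by split=> // _; split.
have hs : (size (lam%:P * Pn n)%R < size ('X * Pn n.+1)%R)%N.
  rewrite (mulrC 'X) size_mulX ?IH1s; last by rewrite -size_poly_eq0 IH1s.
  rewrite ltnS (leq_trans (size_polyMleq _ _)) // size_polyC.
  case: (lam != 0) => /=; first exact: leq_trans IH0a (leqnSn _).
  exact: leq_trans (leq_pred _) (leq_trans IH0a (leqnSn _)).
have hmx : 'X * Pn n.+1 \is monic by rewrite monicMl ?monicX.
have hsz : size (Pn n.+2) = n.+2.
  rewrite Pn_rec size_polyDl; last by rewrite size_polyN.
  by rewrite (mulrC 'X) size_mulX ?IH1s // -size_poly_eq0 IH1s.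
have hmon : Pn n.+2 \is monic.
  by rewrite Pn_rec monicE lead_coefDl ?size_polyN // -monicE.
by rewrite hsz hmon.
Qed.

Definition Sset (f : RF K) := exists q : {poly K}, f = peval q s * Q.

Lemma sum_eq (F : nat -> RF K) (P : nat -> {poly K}) (N : nat) (c : nat -> K) :
  (forall n, (1 <= n)%N -> F n = - peval (P n) s * Q) ->
  \sum_(1 <= n < N) kc (c n) * F n = peval (- \sum_(1 <= n < N) c n *: P n) s * Q.
Proof.
move=> hF.
rewrite pevalN peval_sum mulNr mulr_suml -sumrN.
apply: eq_big_nat => n /andP [hn _].
by rewrite pevalZ hF //; ring.
Qed.

Lemma span_S (F : nat -> RF K) (P : nat -> {poly K}) :
  (forall n, (1 <= n)%N -> P n \is monic /\ size (P n) = n) ->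
  (forall n, (1 <= n)%N -> F n = - peval (P n) s * Q) ->
  forall f, (exists N (c : nat -> K), f = \sum_(1 <= n < N) kc (c n) * F n) <-> Sset f.
Proof.
move=> hP hF f; split.
  by move=> [N [c ->]]; rewrite (sum_eq _ _ hF); eexists.
move=> [q ->].
have [N [c E]] := span_monic hP (- q).
exists N, c; rewrite (sum_eq _ _ hF) -E opprK //.
Qed.

Lemma inO_S f : in_O lam f <-> Sset f.
Proof.
apply: (span_S (P := Pn)) => n hn; first by have [_ ] := Pn_prop n; apply.
exact: OwE.
Qed.

Lemma uwE n : (1 <= n)%N -> uw lam n = - peval 'X^(n.-1) s * Q.
Proof.
case: n => [//|k] _.
rewrite /uw pevalXn /=.
have -> : (k.+1%:Z - 1 = k%:Z)%R by rewrite -addn1 PoszD addrK.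
by rewrite -exprnP.
Qed.

Lemma Xn_prop n : (1 <= n)%N -> ('X^(n.-1) : {poly K}) \is monic /\ size ('X^(n.-1) : {poly K}) = n.
Proof. by case: n => [//|k] _; rewrite monicXn size_polyXn. Qed.

Lemma span_uw_S f :
  (exists N (c : nat -> K), f = \sum_(1 <= n < N) kc (c n) * uw lam n) <-> Sset f.
Proof. exact: (span_S Xn_prop uwE). Qed.

Definition P4 : {poly K} := 'X^2 - (4%:R * lam)%:P.
Definition Q4 : {poly K} := 'X^2 - lam%:P.

Lemma peval_P4 : peval P4 s = s ^+ 2 - kc (4%:R * lam).
Proof. by rewrite /P4 pevalB pevalXn pevalC. Qed.

Lemma P4_neq0 : P4 != 0.
Proof. by rewrite -size_poly_eq0 /P4 size_XnsubC. Qed.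

Lemma S_Ls f : Sset f -> in_Ls s f.
Proof.
move=> [q ->]; split.
  have [H [E1 _]] := laurent q.
  exists (H * Q4), (size q).-1.
  rewrite tofracM -QE E1 g_cancel //.
  exact: expf_neq0 (@tt_neq0 K).
exists (q * P4).
by rewrite pevalM peval_P4 -mulrA keyQ.
Qed.

Hypothesis char0 : [pchar K] =i pred0.

Lemma two_neq0 : (2%:R : K) != 0.
Proof. by rewrite ((pcharf0P K).1 char0 2). Qed.

Lemma Ls_S f : in_Ls s f -> Sset f.
Proof.
move=> [[p [n Ef]] [g Eg]].
set h := g %/ P4; set r := g %% P4.
have Eg2 : g = h * P4 + r by exact: divp_eq.
have hr : (size r <= 2)%N.
  by have := ltn_modp g P4; rewrite P4_neq0 {2}/P4 size_XnsubC.
set a := r`_1; set b := r`_0.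
have Er : r = a *: 'X + b%:P by exact: poly_le2.
have Epg : peval g s = peval h s * (s ^+ 2 - kc (4%:R * lam)) + (kc a * s + kc b).
  by rewrite Eg2 pevalD pevalM peval_P4 Er pevalD pevalZ pevalX pevalC.
have E2 : f = peval h s * Q + (kc a * s + kc b) / Dt s.
  by rewrite Eg Epg mulrDl -mulrA keyQ.
have [H [E3 _]] := laurent h.
set k := (size h).-1 in E3.
set R' : {poly K} := a *: 'X^2 + b *: 'X + (a * lam)%:P.
have Epoly : R' * 'X^(n + k + 1) = (p * 'X^k - H * Q4 * 'X^n) * Q4.
  apply/eqP; rewrite -tofrac_eq; apply/eqP.
  rewrite !tofracM tofracB !tofracM -QE -(ttXn K (n + k + 1)) -(ttXn K k) -(ttXn K n).
  rewrite /R' !tofracD -!mul_polyC !tofracM.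
  rewrite -[tofrac a%:P]/(kc a) -[tofrac b%:P]/(kc b) -[tofrac (a * lam)%:P]/(kc (a * lam)) kcM.
  rewrite -[tofrac 'X]/(tt K).
  have E2' : f = peval h s * Q + (kc a * (tt K + kc lam / tt K) + kc b) / (Q / tt K ^+ 2).
    by rewrite E2 DsE.
  exact: (g_main (@tt_neq0 K) Q_neq0 Ef E2' E3).
have cop : coprimep Q4 ('X^(n + k + 1)).
  apply: coprimep_expr.
  rewrite -[X in coprimep _ X]subr0 -polyC0 coprimep_XsubC /root /Q4 hornerD hornerN hornerXn hornerC.
  by rewrite expr0n /= add0r oppr_eq0.
have dR : Q4 %| R' by rewrite -(Gauss_dvdpl _ cop) Epoly dvdp_mull.
have ER' : R' = a *: Q4 + (b *: 'X + (2%:R * a * lam)%:P).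
  apply/polyP => i; rewrite /R' /Q4 !(coefD, coefB, coefN, coefZ, coefC, coefX, coefXn).
  by case: i => [|[|[|i]]] /=; ring.
have dR2 : Q4 %| b *: 'X + (2%:R * a * lam)%:P.
  by rewrite -(dvdp_addr _ (dvdp_mull (a%:P) (dvdpp Q4))) mul_polyC -ER'.
have R20 : b *: 'X + (2%:R * a * lam)%:P = 0.
  apply: contraTeq dR2 => nz.
  apply/negP => /(dvdp_leq nz).
  rewrite /Q4 size_XnsubC // ltnNge; apply/negP; rewrite negbK.
  apply/leq_sizeP => j hj.
  rewrite coefD coefZ coefX coefC.
  by case: j hj => [|[|j]] //= _; rewrite mulr0 addr0.
have b0 : b = 0.
  by have := congr1 (fun p : {poly K} => p`_1) R20; rewrite /= coefD coefZ coefX coefC /= mulr1 addr0 coef0.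
have a0 : a = 0.
  have := congr1 (fun p : {poly K} => p`_0) R20; rewrite /= coefD coefZ coefX coefC /= mulr0 add0r coef0.
  move/eqP; rewrite !mulf_eq0 (negPf two_neq0) (negPf lam0) /= orbF.
  by move/eqP.
exists h; rewrite E2 a0 b0 rmorph0 mul0r add0r mul0r addr0 //.
Qed.

Lemma covD g1 g2 : cov lam (g1 + g2) = cov lam g1 + cov lam g2.
Proof. by rewrite /cov pevalD mulrDl. Qed.

Lemma covZ c g : cov lam (c *: g) = kc c * cov lam g.
Proof. by rewrite /cov pevalZ mulrA. Qed.

Lemma cov_br g1 g2 : cov lam (g1 * g2^`() - g1^`() * g2) = wbr (cov lam g1) (cov lam g2).
Proof.
rewrite /cov /wbr !Dt_mul !Dt_peval pevalB !pevalM.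
exact: g_br Ds_neq0.
Qed.

Lemma cov_inj g1 g2 : cov lam g1 = cov lam g2 -> g1 = g2.
Proof.
rewrite /cov => /(mulIf (invr_neq0 Ds_neq0)) /eqP; rewrite -subr_eq0 -pevalB => /eqP /transc.
by move/eqP; rewrite subr_eq0 => /eqP.
Qed.

Lemma S_cov f : Sset f <-> exists g : {poly K}, P4 %| g /\ f = cov lam g.
Proof.
split.
  move=> [q ->]; exists (q * P4); split; first exact: dvdp_mulIr.
  by rewrite /cov pevalM peval_P4 -mulrA keyQ.
move=> [g [/dvdpP [q ->] ->]]; exists q.
by rewrite /cov pevalM peval_P4 -mulrA keyQ.
Qed.

Lemma uw_forms n : (1 <= n)%N ->
  uw lam n = - (s ^+ n.-1) * (s ^+ 2 - kc (4%:R * lam)) / Dt s /\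
  uw lam n = - (s ^+ n.-1) * Q.
Proof.
move=> hn; rewrite uwE // pevalXn; split => //.
by rewrite -mulrA keyQ.
Qed.

Lemma uw_indep (N : nat) (c : nat -> K) :
  \sum_(1 <= n < N) kc (c n) * uw lam n = 0 -> forall n, (1 <= n < N)%N -> c n = 0.
Proof.
rewrite (sum_eq _ _ uwE) => /eqP; rewrite mulf_eq0 (negPf Q_neq0) orbF => /eqP /transc /eqP.
rewrite oppr_eq0 => /eqP E n /andP [n1 nN].
have := congr1 (fun p : {poly K} => p`_(n.-1)) E.
rewrite /= coef0 coef_sum => <-.
rewrite -[LHS](@sum_single _ c n N) ?n1 //.
apply: eq_big_nat => i /andP [i1 _].
rewrite coefZ coefXn.
have -> : (n.-1 == i.-1) = (i == n).
  by apply/eqP/eqP => [h|->] //; rewrite -(prednK i1) -(prednK n1) h.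
by case: (i == n); rewrite ?mulr1 ?mulr0.
Qed.

Lemma bracket n m : (1 <= n)%N -> (1 <= m)%N ->
  wbr (uw lam n) (uw lam m) =
  ((n%:Z - m%:Z)%:~R : RF K) * (uw lam (n + m) - kc (4%:R * lam) * uw lam (n + m - 2)).
Proof.
case: n => [//|a] _; case: m => [//|b] _.
have -> : ((a.+1%:Z - b.+1%:Z)%:~R : RF K) = a.+1%:R - b.+1%:R by rewrite intrB.
have [ab0|abpos] := eqVneq (a + b)%N 0%N.
  move/eqP: ab0; rewrite addn_eq0 => /andP [/eqP -> /eqP ->].
  by rewrite subrr mul0r /wbr mulrC subrr.
have Hwbr : wbr (uw lam a.+1) (uw lam b.+1) =
    Q ^+ 2 * Dt s * (b%:R * (s ^+ a * s ^+ b.-1) - a%:R * (s ^+ a.-1 * s ^+ b)).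
  rewrite /wbr !uwE // !pevalXn /= !Dt_mul !Dt_opp !Dt_exp; ring.
have [c ec] : exists c, (a + b)%N = c.+1 by exists (a + b).-1; rewrite prednK // lt0n.
have hb : b%:R * (s ^+ a * s ^+ b.-1) = b%:R * s ^+ c :> RF K.
  case: b ec {Hwbr abpos} => [|b'] ec; first by rewrite !mul0r.
  by rewrite -exprD; congr (_ * s ^+ _); move: ec; rewrite addnS => -[].
have ha : a%:R * (s ^+ a.-1 * s ^+ b) = a%:R * s ^+ c :> RF K.
  case: a ec {Hwbr abpos hb} => [|a'] ec; first by rewrite !mul0r.
  by rewrite -exprD; congr (_ * s ^+ _); move: ec; rewrite addSn => -[].
have e1 : (a.+1 + b.+1 - 2)%N = c.+1 by rewrite addSn addnS subn2 /= ec.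
have e2 : (a.+1 + b.+1)%N = c.+3 by rewrite addSn addnS ec.
rewrite Hwbr hb ha e1 e2 !uwE // !pevalXn /=.
have hs2 : s ^+ 2 = Q ^+ 2 / T ^+ 2 + kc (4%:R * lam) by rewrite -ssE subrK.
rewrite (_ : s ^+ c.+2 = s ^+ c * s ^+ 2); last by rewrite -exprD addn2.
rewrite hs2 DsE.
ring.
Qed.

Lemma Ls_iff f : in_Ls s f <-> Sset f.
Proof. by split; [exact: Ls_S | exact: S_Ls]. Qed.

Lemma main_thm :
  (forall f, in_O lam f <-> in_Ls s f) /\
  (forall f, in_Ls s f <-> exists q : {poly K}, f = peval q s * (tt K ^+ 2 - kc lam)) /\
  (forall f, in_Ls s f <->
     exists q : {poly K}, f = peval q s * (s ^+ 2 - kc (4%:R * lam)) / Dt s) /\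
  ((forall g1 g2 : {poly K}, cov lam (g1 + g2) = cov lam g1 + cov lam g2) /\
   (forall (c : K) (g : {poly K}), cov lam (c *: g) = kc c * cov lam g) /\
   (forall g1 g2 : {poly K},
       cov lam (g1 * g2^`() - g1^`() * g2) = wbr (cov lam g1) (cov lam g2)) /\
   (forall g1 g2 : {poly K}, cov lam g1 = cov lam g2 -> g1 = g2) /\
   (forall f, in_O lam f <->
      exists g : {poly K}, ('X ^+ 2 - (4%:R * lam)%:P) %| g /\ f = cov lam g)) /\
  (forall n : nat, (1 <= n)%N ->
      uw lam n = - (s ^+ n.-1) * (s ^+ 2 - kc (4%:R * lam)) / Dt s /\
      uw lam n = - (s ^+ n.-1) * (tt K ^+ 2 - kc lam)) /\
  (forall f, in_O lam f <->
      exists (N : nat) (c : nat -> K), f = \sum_(1 <= n < N) kc (c n) * uw lam n) /\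
  (forall (N : nat) (c : nat -> K),
      \sum_(1 <= n < N) kc (c n) * uw lam n = 0 ->
      forall n, (1 <= n < N)%N -> c n = 0) /\
  (forall n m : nat, (1 <= n)%N -> (1 <= m)%N ->
      wbr (uw lam n) (uw lam m) =
      ((n%:Z - m%:Z)%:~R : RF K) * (uw lam (n + m) - kc (4%:R * lam) * uw lam (n + m - 2))).
Proof.
split; first by move=> f; rewrite inO_S Ls_iff.
split; first by move=> f; rewrite Ls_iff.
split.
  move=> f; rewrite Ls_iff; split=> -[q ->]; exists q; by rewrite -mulrA keyQ.
split.
  split; first exact: covD.
  split; first exact: covZ.
  split; first exact: cov_br.
  split; first exact: cov_inj.
  by move=> f; rewrite inO_S S_cov.
split; first exact: uw_forms.
split; first by move=> f; rewrite inO_S span_uw_S.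
split; first exact: uw_indep.
exact: bracket.
Qed.

End L.

Theorem theorem4p16 (K : fieldType) (charK0 : [pchar K] =i pred0)
    (lam : K) (lam_neq0 : lam != 0) :
  let s := slam lam in
  (* O(lambda) = L(s_lambda) *)
  (forall f, in_O lam f <-> in_Ls s f) /\
  (* L(s_lambda) = k[t + lambda t^{-1}] (t^2 - lambda) d *)
  (forall f, in_Ls s f <-> exists q : {poly K}, f = peval q s * (tt K ^+ 2 - kc lam)) /\
  (* ... = k[s] (s^2 - 4 lambda) d_s *)
  (forall f, in_Ls s f <->
     exists q : {poly K}, f = peval q s * (s ^+ 2 - kc (4%:R * lam)) / Dt s) /\
  (* O(lambda) ~= (t^2 - 4 lambda) k[t] d, via the change of variables s |-> t *)
  ((forall g1 g2 : {poly K}, cov lam (g1 + g2) = cov lam g1 + cov lam g2) /\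
   (forall (c : K) (g : {poly K}), cov lam (c *: g) = kc c * cov lam g) /\
   (forall g1 g2 : {poly K},
       cov lam (g1 * g2^`() - g1^`() * g2) = wbr (cov lam g1) (cov lam g2)) /\
   (forall g1 g2 : {poly K}, cov lam g1 = cov lam g2 -> g1 = g2) /\
   (forall f, in_O lam f <->
      exists g : {poly K}, ('X ^+ 2 - (4%:R * lam)%:P) %| g /\ f = cov lam g)) /\
  (* the basis u_n *)
  (forall n : nat, (1 <= n)%N ->
      uw lam n = - (s ^+ n.-1) * (s ^+ 2 - kc (4%:R * lam)) / Dt s /\
      uw lam n = - (s ^+ n.-1) * (tt K ^+ 2 - kc lam)) /\
  (forall f, in_O lam f <->
      exists (N : nat) (c : nat -> K), f = \sum_(1 <= n < N) kc (c n) * uw lam n) /\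
  (forall (N : nat) (c : nat -> K),
      \sum_(1 <= n < N) kc (c n) * uw lam n = 0 ->
      forall n, (1 <= n < N)%N -> c n = 0) /\
  (forall n m : nat, (1 <= n)%N -> (1 <= m)%N ->
      wbr (uw lam n) (uw lam m) =
      ((n%:Z - m%:Z)%:~R : RF K) * (uw lam (n + m) - kc (4%:R * lam) * uw lam (n + m - 2))).
Proof.
move=> s.
exact: (main_thm lam_neq0 charK0).
Qed.
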